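(* Let $m\in\mathbb{Z}_{>0}$, let $X$ be a set with $|X|=4m$, and let $\mu_X$ be the uniform distribution on $X$. Let $S$ be the class of all $s:X\to\{-1,1\}$ with $|\{x:s(x)=1\}|=m$, and $B$ the class of all $b:X\to\{-1,1\}$ with $|\{x:b(x)=1\}|=2m$. Then for all $\varepsilon,\delta\ge0$, $\#\mathsf{CompL}^{\mu_X}(S,B,\varepsilon,\delta)=0$, whereas for all $\varepsilon\in(0,1/4)$ and $\delta\in(0,1/2)$, $\#\mathsf{CompL}^{\mu_X}(B,S,\varepsilon,\delta)\ge(1/2-2\varepsilon)m$.
   Context: Distribution-specific comparative learning $\mathsf{CompL}^{\mu_X}_n(S,B,\varepsilon,\delta)$: (possibly randomized) learners taking $n$ points of $X\times\{-1,1\}$ and outputting $f:X\to\{-1,1\}$ such that for every distribution $\mu$ on $X\times\{-1,1\}$ with marginal $\mu|_X=\mu_X$ and $\Pr_\mu[s(x)=y]=1$ for some $s\in S$, given $n$ i.i.d. samples, with probability $\ge1-\delta$, $\Pr_\mu[f(x)\ne y]\le\inf_{b\in B}\Pr_\mu[b(x)\ne y]+\varepsilon$. $\#\mathsf{CompL}^{\mu_X}$ is the least such $n$. *)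

(* Defs.v *)
From HB Require Import structures.
From mathcomp Require Import all_boot all_order all_algebra.
From mathcomp Require Import boolp classical_sets reals constructive_ereal ereal.
Set Implicit Arguments. Unset Strict Implicit. Unset Printing Implicit Defensive.
Import Order.TTheory GRing.Theory Num.Theory.
Local Open Scope ring_scope.

(* Labels {-1,1} are encoded as bool: true <-> 1, false <-> -1.
   Hypotheses X -> {-1,1} are finite functions {ffun X -> bool}. *)
Section CompL.
Context {R : realType} {X : finType}.

Definition hyp := {ffun X -> bool}.

Definition is_dist (T : finType) (p : {ffun T -> R}) : Prop :=
  (forall t, 0 <= p t) /\ \sum_t p t = 1.

Definition uniform (x : X) : R := (#|X|%:R)^-1.

Definition err (mu : {ffun X * bool -> R}) (f : hyp) : R :=
  \sum_(p : X * bool | f p.1 != p.2) mu p.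

Definition admissible (muX : X -> R) (S : {set hyp}) (mu : {ffun X * bool -> R}) : Prop :=
  [/\ is_dist mu,
      (forall x, mu (x, true) + mu (x, false) = muX x) &
      exists2 s, s \in S & \sum_(p : X * bool | s p.1 == p.2) mu p = 1].

(* A (possibly randomized) learner on n points: maps a sample to a
   probability distribution over output hypotheses. *)
Definition learner (n : nat) := n.-tuple (X * bool) -> {ffun hyp -> R}.

Definition is_learner n (A : learner n) : Prop := forall t, is_dist (A t).

(* Probability (over the i.i.d. sample and the learner's randomness) that the
   output f satisfies err f <= inf_{b in B} err b + eps
   (i.e. err f - eps is a lower bound of {err b | b in B}). *)
Definition success_prob n (A : learner n) (mu : {ffun X * bool -> R})
    (B : {set hyp}) (eps : R) : R :=
  \sum_(t : n.-tuple (X * bool))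
     (\prod_(i < n) mu (tnth t i)) *
     \sum_(f : hyp | [forall b in B, err mu f <= err mu b + eps]) A t f.

Definition CompL (muX : X -> R) (n : nat) (S B : {set hyp}) (eps delta : R) : Prop :=
  exists A : learner n, is_learner A /\
    forall mu, admissible muX S mu -> 1 - delta <= success_prob A mu B eps.

(* #CompL^{muX}(S,B,eps,delta): least such n (+oo if none), as an extended real *)
Definition numCompL (muX : X -> R) (S B : {set hyp}) (eps delta : R) : \bar R :=
  ereal_inf [set (n%:R)%:E | n in [set n | CompL muX n S B eps delta]].

Definition classK (k : nat) : {set hyp} := [set h : hyp | #|[set x | h x]| == k].

End CompL.

(* Main.v *)
Require Import Defs.
From HB Require Import structures.
From mathcomp Require Import all_boot all_order all_algebra.
From mathcomp Require Import boolp classical_sets reals constructive_ereal ereal.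
From mathcomp Require Import ring lra.
Set Implicit Arguments. Unset Strict Implicit. Unset Printing Implicit Defensive.
Import Order.TTheory GRing.Theory Num.Theory.
Local Open Scope ring_scope.
Section Aux.
Context {R : realType} {X : finType}.

Lemma sum_tuple_prod (T : finType) n (F : T -> R) :
  \sum_(t : n.-tuple T) \prod_(i < n) F (tnth t i) = \prod_(i < n) \sum_p F p.
Proof.
rewrite bigA_distr_bigA /=.
rewrite (reindex (fun f : {ffun 'I_n -> T} => [tuple f i | i < n])) /=.
  by apply: eq_bigr => f _; apply: eq_bigr => i _; rewrite tnth_mktuple.
exists (fun t : n.-tuple T => [ffun i => tnth t i]) => x _.
  by apply/ffunP => i; rewrite ffunE tnth_mktuple.
by apply: eq_from_tnth => i; rewrite tnth_mktuple ffunE.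
Qed.

Lemma sum_tuple_dist n (mu : {ffun X * bool -> R}) : is_dist mu ->
  \sum_(t : n.-tuple (X * bool)) \prod_(i < n) mu (tnth t i) = 1.
Proof.
move=> [_ H1]; rewrite sum_tuple_prod.
by rewrite (eq_bigr (fun _ => 1)) ?prodr_const ?expr1n // => i _.
Qed.

Definition muS (s : @hyp X) : {ffun X * bool -> R} :=
  [ffun p => if s p.1 == p.2 then uniform p.1 else 0].

Definition dd (h s : @hyp X) : nat := #|[set x | h x != s x]|.

Lemma sum_pair (F : X * bool -> R) :
  \sum_p F p = \sum_x (F (x, true) + F (x, false)).
Proof.
rewrite (eq_bigr (fun x => \sum_b F (x, b))); last first.
  by move=> x _; rewrite big_bool.
by rewrite pair_bigA /=; apply: eq_bigr => -[].
Qed.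

Lemma err_muS (s h : @hyp X) : err (muS s) h = (dd h s)%:R * (#|X|%:R)^-1.
Proof.
rewrite /err big_mkcond sum_pair /dd.
rewrite (eq_bigr (fun x => if x \in [set x | h x != s x] then (#|X|%:R)^-1 else 0)).
  by rewrite -big_mkcond /= sumr_const mulr_natl.
move=> x _; rewrite !ffunE inE /= /uniform.
by case: (h x); case: (s x); rewrite /= ?addr0 ?add0r.
Qed.

Lemma muS_adm (S : {set @hyp X}) s : (0 < #|X|)%N -> s \in S -> admissible uniform S (muS s).
Proof.
move=> Hc Hs; have Hu : forall x : X, 0 <= uniform (X:=X) x :> R.
  by move=> x; rewrite /uniform invr_ge0 ler0n.
have Hm : forall x, muS s (x, true) + muS s (x, false) = uniform x.
  by move=> x; rewrite !ffunE /=; case: (s x); rewrite /= ?addr0 ?add0r.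
split.
- split; first by move=> [x b]; rewrite ffunE; case: ifP.
  rewrite sum_pair (eq_bigr _ (fun x _ => Hm x)) /uniform sumr_const.
  by rewrite -[LHS]mulr_natl mulfV // pnatr_eq0 -lt0n.
- exact: Hm.
- exists s => //.
  rewrite big_mkcond sum_pair /= -[RHS](_ : \sum_(x : X) uniform x = 1).
    apply: eq_bigr => x _; rewrite !ffunE /=.
    by case: (s x); rewrite /= ?eqxx ?addr0 ?add0r.
  rewrite /uniform sumr_const.
  by rewrite -[LHS]mulr_natl mulfV // pnatr_eq0 -lt0n.
Qed.

End Aux.
Section P1.
Context {R : realType} {X : finType}.

Lemma adm_muS (S : {set @hyp X}) (mu : {ffun X * bool -> R}) (s : @hyp X) :
  is_dist mu -> (forall x, mu (x, true) + mu (x, false) = uniform x) ->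
  \sum_(p : X * bool | s p.1 == p.2) mu p = 1 -> mu = muS s.
Proof.
move=> [H0 H1] Hm Hs.
have Hd : \sum_(p : X * bool | s p.1 != p.2) mu p = 0.
  by move: H1; rewrite (bigID (fun p : X * bool => s p.1 == p.2)) /= Hs => /eqP; rewrite -subr_eq0 addrC addrK => /eqP.
have Z := psumr_eq0P (fun p _ => H0 p) Hd.
apply/ffunP => -[x b]; rewrite ffunE /=.
case: eqP => E.
  have := Hm x; case: b E => E.
    by rewrite (Z (x, false)) /= ?E // addr0.
  by rewrite (Z (x, true)) /= ?E // add0r.
by apply: Z => /=; apply/eqP.
Qed.

Lemma sum_pred1 (T : finType) (a : T) (P : pred T) : P a ->
  \sum_(t | P t) ((t == a)%:R : R) = 1.
Proof.
move=> Pa; rewrite (bigD1 a) //= eqxx big1 ?addr0 // => t /andP[_ /negbTE ->] //.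
Qed.

Lemma part1 (m : nat) (eps delta : R) : (0 < m)%N -> #|X| = (4 * m)%N ->
  0 <= eps -> 0 <= delta -> CompL (uniform (X:=X)) 0 (classK m) (classK (2 * m)) eps delta.
Proof.
move=> m0 cX e0 d0.
pose f0 : @hyp X := [ffun _ => false].
exists (fun _ => [ffun f => ((f == f0)%:R : R)]); split.
  move=> t; split; first by move=> f; rewrite ffunE ler0n.
  rewrite (eq_bigr (fun f => ((f == f0)%:R : R))); last by move=> f _; rewrite ffunE.
  by rewrite (@sum_pred1 _ f0 xpredT isT).
move=> mu [Hd Hm [s Hs Hsum]].
have -> := adm_muS (classK m) Hd Hm Hsum.
rewrite /success_prob.
rewrite (eq_bigr (fun t => \prod_(i < 0) muS s (tnth t i))).
  have Hc : (0 < #|X|)%N by rewrite cX muln_gt0.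
  have [Hdist _ _] := muS_adm (R:=R) Hc Hs.
  by rewrite sum_tuple_dist // lerBlDr lerDl.
move=> t _; rewrite (eq_bigr (fun f => ((f == f0)%:R : R))); last by move=> f _; rewrite ffunE.
rewrite sum_pred1 ?mulr1 //.
apply/forall_inP => b Hb; rewrite !err_muS ler_wpDr //.
rewrite ler_wpM2r ?invr_ge0 ?ler0n // ler_nat.
move: Hs Hb; rewrite !inE /dd => /eqP Hs /eqP Hb.
have E : [set x | f0 x != s x] = [set x | s x].
  by apply/setP => x; rewrite !inE /f0 ffunE; case: (s x).
rewrite E Hs.
have : (#|[set x | b x]| <= #|[set x | b x] :\: [set x | s x]| + #|[set x | s x]|)%N.
  apply: leq_trans (leq_card_setU _ _); idtac.
apply/subset_leq_card/fintype.subsetP => x; rewrite !inE.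
  by case: (b x); case: (s x).
rewrite Hb Hs => H.
have : (#|[set x | b x] :\: [set x | s x]| <= #|[set x | b x != s x]|)%N.
  apply/subset_leq_card/fintype.subsetP => x; rewrite !inE.
  by case: (b x); case: (s x).
move: H; rewrite mul2n -addnn leq_add2r; exact: leq_trans.
Qed.
End P1.
Section P2.
Context {R : realType} {X : finType}.
Variable m : nat.
Local Notation Y := (('I_m * bool) * bool)%type.
Variable HXY : #|X| = #|{: Y}|.

Definition eX (x : X) : Y := enum_val (cast_ord HXY (enum_rank x)).
Definition eY (y : Y) : X := enum_val (cast_ord (esym HXY) (enum_rank y)).
Lemma eXK : cancel eX eY.
Proof. by move=> x; rewrite /eX /eY enum_valK cast_ordK enum_rankK. Qed.
Lemma eYK : cancel eY eX.
Proof. by move=> y; rewrite /eX /eY enum_valK cast_ordKV enum_rankK. Qed.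

Lemma card_pre (P : pred Y) : #|[set x : X | P (eX x)]| = #|[set y : Y | P y]|.
Proof.
have -> : [set x : X | P (eX x)] = eY @: [set y : Y | P y].
  apply/setP => x; rewrite inE; apply/idP/imsetP.
    by move=> Px; exists (eX x); rewrite ?inE ?eXK.
  by move=> [y]; rewrite inE => Py ->; rewrite eYK.
by rewrite card_imset //; apply: can_inj eYK.
Qed.

Lemma card_graph (c : {ffun 'I_m * bool -> bool}) (Q : pred ('I_m * bool)) :
  #|[set y : Y | (y.2 == c y.1) && Q y.1]| = #|[set j | Q j]|.
Proof.
have -> : [set y : Y | (y.2 == c y.1) && Q y.1] = (fun j => (j, c j)) @: [set j | Q j].
  apply/setP => -[j b]; rewrite inE /=; apply/idP/imsetP.
    by move=> /andP[/eqP -> Qj]; exists j; rewrite ?inE.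
  by move=> [j' Qj [-> ->]]; rewrite eqxx; rewrite inE in Qj.
by rewrite card_imset // => j1 j2 [].
Qed.

Lemma card_half (b : bool) : #|[set j : 'I_m * bool | j.2 == b]| = m.
Proof.
have -> : [set j : 'I_m * bool | j.2 == b] = (fun k => (k, b)) @: [set: 'I_m].
  apply/setP => -[k b']; rewrite inE /=; apply/idP/imsetP.
    by move=> /eqP Eb; exists k; rewrite ?inE ?Eb.
  by move=> [k' _ [_ ->]].
by rewrite card_imset ?cardsT ?card_ord // => k1 k2 [].
Qed.


Definition sC (c : {ffun 'I_m * bool -> bool}) : @hyp X :=
  [ffun x => (eX x).2 == c (eX x).1].
Definition bC (c : {ffun 'I_m * bool -> bool}) : @hyp X :=
  [ffun x => ((eX x).2 == c (eX x).1) && ~~ (eX x).1.2].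

Lemma set_ffun (T : finType) (g : T -> bool) : [set x | [ffun x => g x] x] = [set x | g x].
Proof. by apply/setP => x; rewrite !inE ffunE. Qed.

Lemma cardT2 : #|[set j : 'I_m * bool | true]| = (2 * m)%N.
Proof.
rewrite (_ : [set j : 'I_m * bool | true] = finset.setT); last by apply/setP => j; rewrite !inE.
by rewrite cardsT card_prod card_ord card_bool mulnC.
Qed.

Lemma sC_class c : sC c \in classK (2 * m).
Proof.
rewrite inE /sC set_ffun (card_pre (fun y => y.2 == c y.1)).
apply/eqP; rewrite -cardT2 -[RHS](card_graph c xpredT).
by apply: eq_card => y; rewrite !inE andbT.
Qed.

Lemma bC_class c : bC c \in classK m.
Proof.
rewrite inE /bC set_ffun (card_pre (fun y => (y.2 == c y.1) && ~~ y.1.2)).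
apply/eqP; rewrite (card_graph c (fun j => ~~ j.2)) -[RHS](card_half false).
by apply: eq_card => j; rewrite !inE eqbF_neg.
Qed.

Lemma dd_bC c : dd (bC c) (sC c) = m.
Proof.
rewrite /dd /bC /sC.
have -> : [set x | [ffun x => ((eX x).2 == c (eX x).1) && ~~ (eX x).1.2] x != [ffun x => (eX x).2 == c (eX x).1] x]
   = [set x | ((eX x).2 == c (eX x).1) && (eX x).1.2].
  by apply/setP => x; rewrite !inE !ffunE; case: ((eX x).2 == _); case: (eX x).1.2.
rewrite (card_pre (fun y => (y.2 == c y.1) && y.1.2)).
rewrite (card_graph c (fun j => j.2)) -[RHS](card_half true).
by apply: eq_card => j; rewrite !inE eqb_id.
Qed.


Definition Sn n (t : n.-tuple (X * bool)) : {set 'I_m * bool} :=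
  (fun i => (eX (tnth t i).1).1) @: [set: 'I_n].

Definition sig n (t : n.-tuple (X * bool)) (c : {ffun 'I_m * bool -> bool}) : {ffun 'I_m * bool -> bool} :=
  [ffun j => if j \in Sn t then c j else ~~ c j].

Lemma sigK n (t : n.-tuple (X * bool)) : involutive (sig t).
Proof. by move=> c; apply/ffunP => j; rewrite !ffunE; case: (j \in Sn t); rewrite ?negbK. Qed.

Lemma sC_sig_seen n (t : n.-tuple (X * bool)) c i :
  sC (sig t c) (tnth t i).1 = sC c (tnth t i).1.
Proof.
rewrite !ffunE; suff -> : (eX (tnth t i).1).1 \in Sn t by [].
by apply/imsetP; exists i; rewrite ?inE.
Qed.

Lemma P_sig n (t : n.-tuple (X * bool)) c :
  \prod_(i < n) muS (R:=R) (sC (sig t c)) (tnth t i) = \prod_(i < n) muS (sC c) (tnth t i).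
Proof. by apply: eq_bigr => i _; rewrite ffunE sC_sig_seen [RHS]ffunE. Qed.

Lemma dd_sig n (t : n.-tuple (X * bool)) c :
  dd (sC c) (sC (sig t c)) = (#|~: Sn t| * 2)%N.
Proof.
rewrite /dd.
have -> : [set x | sC c x != sC (sig t c) x] = [set x | (eX x).1 \in ~: Sn t].
  apply/setP => x; rewrite !inE !ffunE.
  by case: ((eX x).1 \in Sn t); case: ((eX x).2); case: (c _).
rewrite (card_pre (fun y => y.1 \in ~: Sn t)).
rewrite -(card_bool) -cardsT -cardsX; apply: eq_card => -[j b]; by rewrite !inE andbT.
Qed.

Lemma card_unseen n (t : n.-tuple (X * bool)) : (2 * m <= #|~: Sn t| + n)%N.
Proof.
have H1 : (#|Sn t| <= n)%N.
  by apply: leq_trans (leq_imset_card _ _) _; rewrite cardsT card_ord.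
have H2 := cardsC (Sn t); rewrite card_prod card_ord card_bool in H2.
by rewrite mulnC -H2 addnC leq_add2l.
Qed.

Lemma dd_tri (f s1 s2 : @hyp X) : (dd s1 s2 <= dd f s1 + dd f s2)%N.
Proof.
apply: leq_trans (leq_card_setU _ _); apply/subset_leq_card/fintype.subsetP => x.
rewrite !inE; case: (f x); case: (s1 x); case: (s2 x) => //.
Qed.


Lemma part2 (eps delta : R) n : (0 < m)%N -> 0 < eps < 1/4 -> 0 < delta < 1/2 ->
  CompL (uniform (X:=X)) n (classK (2 * m)) (classK m) eps delta ->
  (1/2 - 2 * eps) * m%:R <= n%:R.
Proof.
move=> m0 /andP[e0 e1] /andP[d0 d1] [A [HA Hs]].
rewrite leNgt; apply/negP => Hlt.
have cX : #|X| = (4 * m)%N by rewrite HXY !card_prod card_ord card_bool -mulnA mulnC.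
have Hc : (0 < #|X|)%N by rewrite cX muln_gt0.
have mr : 0 < (m%:R : R) by rewrite ltr0n.
set w1 := ((#|X|%:R : R)^-1).
have w1E : w1 = (4 * m%:R)^-1 by rewrite /w1 cX natrM.
have w10 : 0 < w1 by rewrite w1E invr_gt0; lra.
pose good c f := [forall b in classK m, err (muS (R:=R) (sC c)) f <= err (muS (sC c)) b + eps].
have Kb : forall c f, good c f -> (dd f (sC c))%:R <= m%:R + 4 * m%:R * eps :> R.
  move=> c f /forall_inP /(_ _ (bC_class c)); rewrite !err_muS dd_bC -/w1 => H.
  rewrite -(ler_pM2r w10); apply: le_trans H _.
  rewrite le_eqVlt; apply/orP; left; apply/eqP.
  rewrite w1E; field; lra.
have K5 : forall (t : n.-tuple (X * bool)) c f, good c f -> good (sig t c) f -> False.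
  move=> t c f g1 g2.
  have h1 := Kb _ _ g1; have h2 := Kb _ _ g2.
  have h3 := dd_tri f (sC c) (sC (sig t c)); rewrite dd_sig in h3.
  have h4 := card_unseen t.
  move: h3 h4; rewrite -!(ler_nat R) !natrD !natrM => h3 h4.
  have := mulr_gt0 mr (_ : 0 < 1/4 - eps); lra.
pose P c (t : n.-tuple (X * bool)) := \prod_(i < n) muS (R:=R) (sC c) (tnth t i).
pose G c (t : n.-tuple (X * bool)) := \sum_(f | good c f) A t f.
have P0 : forall c t, 0 <= P c t.
  move=> c t; apply: prodr_ge0 => i _; rewrite ffunE; case: ifP => _ //.
  by rewrite /uniform invr_ge0 ler0n.
have GG : forall c t, G c t + G (sig t c) t <= 1.
  move=> c t; rewrite /G (big_mkcond (good c)) (big_mkcond (good (sig t c))) -big_split /=.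
  have [HA0 HA1] := HA t; rewrite -HA1; apply: ler_sum => f _.
  case g1: (good c f); case g2: (good (sig t c) f); rewrite ?addr0 ?add0r //.
  by case: (K5 t c f g1 g2).
have Half : forall t, \sum_c P c t * G c t <= 2^-1 * \sum_c P c t.
  move=> t.
  have E : \sum_c P c t * G c t = \sum_c P c t * G (sig t c) t.
    rewrite (reindex_inj (can_inj (sigK t))) /=; apply: eq_bigr => c _.
    by rewrite /P P_sig.
  have : \sum_c P c t * G c t + \sum_c P c t * G c t <= \sum_c P c t.
    rewrite {2}E -big_split /=; apply: ler_sum => c _.
    by rewrite -mulrDr ler_piMr.
  lra.
have Hsucc : forall c, 1 - delta <= \sum_t P c t * G c t.
  move=> c; exact: (Hs _ (muS_adm Hc (sC_class c))).
have Sum1 : forall c, \sum_t P c t = 1.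
  move=> c; have [Hd _ _] := muS_adm (R:=R) Hc (sC_class c).
  exact: sum_tuple_dist.
have Ntot : \sum_(c : {ffun 'I_m * bool -> bool}) (1 - delta) <= 2^-1 * \sum_(c : {ffun 'I_m * bool -> bool}) 1.
  apply: le_trans (ler_sum _ (fun c _ => Hsucc c)) _.
  rewrite exchange_big /=; apply: le_trans (ler_sum _ (fun t _ => Half t)) _.
  rewrite -mulr_sumr exchange_big /=.
  by rewrite (eq_bigr _ (fun c _ => Sum1 c)).
have Npos : (0 < #|{ffun 'I_m * bool -> bool}|)%N.
  by apply/card_gt0P; exists [ffun => true].
move: Ntot; rewrite !sumr_const -(mulr_natr (1 - delta)) -(mulr_natr 1) mul1r.
have : 0 < (#|{ffun 'I_m * bool -> bool}|%:R : R) by rewrite ltr0n.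
move: (#|_|%:R) => N hN.
have := mulr_gt0 hN (_ : 0 < 1/2 - delta); lra.
Qed.

End P2.

Unset Implicit Arguments.

Theorem lemmaC1 (R : realType) (m : nat) (X : finType) :
  (0 < m)%N -> #|X| = (4 * m)%N ->
  (forall eps delta : R, 0 <= eps -> 0 <= delta ->
     numCompL (uniform (X:=X)) (classK m) (classK (2 * m)) eps delta = 0%E) /\
  (forall eps delta : R, 0 < eps < 1/4 -> 0 < delta < 1/2 ->
     (((1/2 - 2 * eps) * m%:R)%:E <=
        numCompL (uniform (X:=X)) (classK (2 * m)) (classK m) eps delta)%E).
Proof.
move=> m0 cX.
have HXY : #|X| = #|{: ('I_m * bool) * bool}|.
  by rewrite cX !card_prod card_ord card_bool -mulnA mulnC.
split.
- move=> eps delta e0 d0; apply/eqP; rewrite eq_le; apply/andP; split.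
    apply: ereal_inf_lbound; exists 0%N; last by [].
    exact: part1.
  by apply/ereal_infP => y [n _ <-]; rewrite lee_fin ler0n.
- move=> eps delta He Hd; apply/ereal_infP => y [n Hn <-]; rewrite lee_fin.
  exact: (part2 HXY m0 He Hd Hn).
Qed.
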